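(* For every finite simple graph $G$, the acyclic chromatic number satisfies $a(G)\le \tau(G)$.
   Context: $\tau(G)$ denotes the number of vertices in a longest path of $G$. An acyclic colouring of $G$ is a proper vertex colouring of $G$ in which no cycle of $G$ is coloured with only two colours; $a(G)$ is the minimum number of colours in an acyclic colouring of $G$. *)

(* Defs.v *)
(* A finite simple graph is a symmetric irreflexive
   relation e : rel T on a finite type T of vertices. *)
From mathcomp Require Import all_boot.
Set Implicit Arguments. Unset Strict Implicit. Unset Printing Implicit Defensive.

Section Graph.
Variables (T : finType) (e : rel T).

Definition is_gpath (s : seq T) : bool :=
  uniq s && (if s is x :: s' then path e x s' else true).

Definition is_gcycle (s : seq T) : bool :=
  [&& uniq s, 3 <= size s & cycle e s].

(* tau(G): number of vertices of a longest path
   (paths have at most #|T| vertices since they are duplicate-free). *)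
Definition tau : nat :=
  \max_(n < #|T|.+1 | [exists s : n.-tuple T, is_gpath s]) n.

Definition proper_col k (c : T -> 'I_k) : bool :=
  [forall x, forall y, e x y ==> (c x != c y)].

(* acyclic colouring: proper, and no cycle uses at most two colours
   (cycles have at most #|T| vertices since they are duplicate-free). *)
Definition acyclic_col k (c : T -> 'I_k) : bool :=
  proper_col c &&
  ~~ [exists n : 'I_#|T|.+1, exists s : n.-tuple T,
        is_gcycle s && (size (undup (map c s)) <= 2)].

Definition has_acyclic_col (k : nat) : bool :=
  [exists c : {ffun T -> 'I_k}, acyclic_col c].

Hypothesis irr : irreflexive e.

Lemma has_acyclic_col_exists : exists k, has_acyclic_col k.
Proof.
exists #|T|; apply/existsP; exists [ffun x => enum_rank x].
apply/andP; split.
  apply/forallP => x; apply/forallP => y; apply/implyP => exy.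
  rewrite !ffunE; apply/negP => /eqP /enum_rank_inj exy'.
  by rewrite exy' irr in exy.
apply/negP => /existsP [n /existsP [s /andP [/and3P [us s3 _] hs]]].
have : uniq (map [ffun x => enum_rank x] s).
  rewrite map_inj_uniq // => x y; rewrite !ffunE; exact: enum_rank_inj.
move/undup_id => hu; move: hs; rewrite hu size_map.
by move=> h; have := leq_trans s3 h.
Qed.

Definition acyclic_chrom : nat := ex_minn has_acyclic_col_exists.

End Graph.

(* Main.v *)
Require Import Defs.
From mathcomp Require Import all_boot.
Set Implicit Arguments. Unset Strict Implicit. Unset Printing Implicit Defensive.

Section Main.
Variables (T : finType) (e : rel T).
Hypotheses (e_sym : symmetric e) (e_irr : irreflexive e).

Definition eS (B : {set T}) : rel T := fun a b => [&& a \in B, b \in B & e a b].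

Lemma path_closed (r : rel T) (C : pred T) y q :
  (forall a b, C a -> r a b -> C b) -> path r y q -> C y -> all C q.
Proof.
move=> hC; elim: q y => [|z q IH] y //= /andP[ryz pq] Cy.
have Cz := hC _ _ Cy ryz. by rewrite Cz (IH z).
Qed.

Lemma path_restrict (B : {set T}) y q : path e y q -> y \in B ->
  all (fun z => z \in B) q -> path (eS B) y q.
Proof.
elim: q y => [|z q IH] y //= /andP[eyz pq] yB /andP[zB qB].
by rewrite /eS /= yB zB eyz IH.
Qed.

Definition good (S A : {set T}) (c : T -> nat) : Prop :=
 [/\ forall x y, x \in S -> y \in S -> e x y -> c x != c y,
     forall v a b, v \in S -> a \in S -> b \in S -> e v a -> e v b ->
        c a < c v -> c b < c v -> c a = c b -> a = b &
     forall v, v \in S -> exists x, exists s, [/\ path e x s, uniq (x :: s),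
        all (fun z => z \in S) (x :: s), x \in A & (last x s = v /\ size s = c v)]].

Definition hyp (S A : {set T}) : Prop :=
  forall v, v \in S -> exists2 a, (a \in A) && (a \in S) & connect (eS S) a v.

Lemma good0 A : good set0 A (fun _ => 0).
Proof. by split=> [x y|v a b|v]; rewrite inE. Qed.

Lemma main n : forall (S A : {set T}), #|S| <= n -> hyp S A -> exists c, good S A c.
Proof.
elim: n => [|n IH] S A hS hA.
  by move: hS; rewrite leqn0 => /eqP/cards0_eq ->; exists (fun _ => 0); exact: good0.
case: (set_0Vmem S) => [->|[v0 v0S]]; first by exists (fun _ => 0); exact: good0.
have [x /andP[xA xS] _] := hA v0 v0S.
pose K := [set y | connect (eS S) x y].
have Kcl : forall a b, a \in K -> eS S a b -> b \in K.
  move=> a b; rewrite !inE => xa ab; apply: connect_trans xa _; exact: connect1.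
have KS : forall y, y \in K -> y \in S.
  move=> y; rewrite inE => /connectP [p pp ->].
  have : all (fun z => z \in S) p.
    apply: path_closed pp xS => a b _ /and3P[].
    done.
  move=> allp; have := mem_last x p; rewrite inE => /orP[/eqP ->//|].
  by move/(allP allp).
have xK : x \in K by rewrite inE connect0.
have eSsym : forall a b, eS S a b = eS S b a.
  by move=> a b; rewrite /eS /= e_sym andbCA.
have cross : forall y z, y \in K -> z \in S -> e y z -> z \in K.
  by move=> y z yK zS eyz; apply: (Kcl y) => //; rewrite /eS /= KS // zS eyz.
have cross' : forall y z, z \in K -> y \in S -> e y z -> y \in K.
  by move=> y z zK yS eyz; apply: (cross z) => //; rewrite e_sym.
pose S1 := S :\: K. pose S2 := K :\ x. pose A2 := [set y | e x y].
have hS1 : #|S1| <= n.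
  rewrite -ltnS; apply: leq_trans hS; apply: proper_card; apply/properP; split.
    exact: subsetDl.
  by exists x => //; rewrite inE xK.
have hS2 : #|S2| <= n.
  rewrite -ltnS; apply: leq_trans hS; apply: proper_card; apply/properP; split.
    by apply/subsetP => y; rewrite inE => /andP[_ /KS].
  by exists x => //; rewrite !inE eqxx.
have hyp1 : hyp S1 A.
  move=> v; rewrite inE => /andP[vK vS].
  have [a /andP[aA aS] av] := hA v vS.
  have aK : a \notin K.
    apply/negP; rewrite inE => xa; move/negP: vK; apply; rewrite inE.
    exact: connect_trans xa av.
  have aS1 : a \in S1 by rewrite inE aK aS.
  exists a; first by rewrite aA aS1.
  case/connectP: av => p pp ->; apply/connectP; exists p => //.
  apply: path_restrict => //; first by apply: sub_path pp => u w /and3P[].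
  apply: path_closed pp aS1 => u w uS1 uw.
  have uS1' : u \in S1 := uS1. suff : w \in S1 by []. move: uS1'; rewrite in_setD => /andP[uK uS].
  have := uw; rewrite /eS /= => /and3P[_ wS _].
  rewrite in_setD wS andbT; apply/negP => wK; move/negP: uK; apply.
  by apply: (Kcl w); rewrite // eSsym.
have hyp2 : hyp S2 A2.
  move=> v; rewrite !inE => /andP[vx]; rewrite -/(connect (eS S) x v) => xv.
  case/connectP: xv => p pp vl.
  case/shortenP: pp vl => [[|y q]] pp' up' _ vl.
    by rewrite /= in vl; rewrite vl eqxx in vx.
  move: pp' => /= /andP[xy pq].
  have yK : y \in K by apply: (Kcl x).
  have allK : all (fun z => z \in K) q by apply: path_closed pq yK.
  move: up'; rewrite /= inE negb_or => /andP[/andP[xny xq] _].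
  have yS2 : y \in S2 by rewrite in_setD1 eq_sym xny yK.
  exists y; first by rewrite yS2 andbT inE; case/and3P: xy.
  apply/connectP; exists q => //.
  apply: path_restrict => //; first by apply: sub_path pq => u w /and3P[].
  apply/allP => z zq; rewrite in_setD1 (allP allK z zq) andbT.
  by apply/eqP => zx; rewrite -zx zq in xq.
have [c1 [p11 p12 p13]] := IH S1 A hS1 hyp1.
have [c2 [p21 p22 p23]] := IH S2 A2 hS2 hyp2.
exists (fun y => if y \in K then (if y == x then 0 else (c2 y).+1) else c1 y).
split.
- move=> u w uS wS euw.
  case: ifP => uK.
    have wK := cross u w uK wS euw; rewrite wK.
    case: (u =P x) => [ux|/eqP ux].
      case: (w =P x) => [wx|//]; by rewrite ux wx e_irr in euw.
    case: (w =P x) => // /eqP wx.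
    by rewrite eqSS; apply: p21 => //; rewrite in_setD1 ?ux ?wx.
  have wK : w \in K = false by apply/negP => wK'; have := cross' u w wK' uS euw; rewrite uK.
  rewrite wK; apply: p11 => //; by rewrite in_setD ?uK ?wK ?uS ?wS.
- move=> v a b vS aS bS eva evb.
  case: (boolP (v \in K)) => vK.
    have aK := cross v a vK aS eva; have bK := cross v b vK bS evb.
    rewrite aK bK; case: (v =P x) => [//|/eqP vx].
    case: (a =P x) => [ax|/eqP ax]; case: (b =P x) => [bx|/eqP bx] //.
      by move=> _ _ _; rewrite ax bx.
    move=> ha hb /eqP; rewrite eqSS => /eqP hab.
    by apply: (p22 v) => //; rewrite ?in_setD1 ?vx ?ax ?bx.
  have aK : a \in K = false by apply/negP => aK'; have := cross' v a aK' vS eva; rewrite (negbTE vK).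
  have bK : b \in K = false by apply/negP => bK'; have := cross' v b bK' vS evb; rewrite (negbTE vK).
  rewrite aK bK; apply: (p12 v) => //; by rewrite in_setD ?vK ?aK ?bK.
- move=> v vS.
  case: ifP => vK.
    case: (v =P x) => [->|/eqP vx].
      by exists x, [::]; split => //=; rewrite xS.
    have vS2 : v \in S2 by rewrite in_setD1 vx.
    have [y [s [ps us als yA2 [lv sz]]]] := p23 v vS2.
    exists x, (y :: s); split => //=.
    + by rewrite ps andbT; rewrite inE in yA2.
    + apply/andP; split; last by move: us. apply/negP => xin.
      by have := allP als x xin; rewrite in_setD1 eqxx.
    + rewrite xS; apply: sub_all als => z; rewrite in_setD1 => /andP[_ /KS].
      done.
    + by rewrite sz.
  have vS1 : v \in S1 by rewrite in_setD vK.
  have [y [s [ps us als yA [lv sz]]]] := p13 v vS1.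
  exists y, s; split => //.
  by apply: sub_all als => z; rewrite in_setD => /andP[].
Qed.

Lemma max_in (c : T -> nat) (s : seq T) : s != [::] ->
  exists2 v, v \in s & forall w, w \in s -> c w <= c v.
Proof.
elim: s => [//|x s IH] _.
case: (altP (s =P [::])) => [->|/IH [v vs hv]].
  exists x; first by rewrite inE.
  by move=> w; rewrite inE => /eqP ->.
case: (leqP (c x) (c v)) => h.
  exists v; first by rewrite inE vs orbT.
  by move=> w; rewrite inE => /orP[/eqP->|/hv].
exists x; first by rewrite inE eqxx.
move=> w; rewrite inE => /orP[/eqP->//|/hv/leq_trans]; apply; exact: ltnW.
Qed.

End Main.

Theorem corollary3p1 (T : finType) (e : rel T)
  (e_sym : symmetric e) (e_irr : irreflexive e) :
  acyclic_chrom e_irr <= tau e.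
Proof.
have hypT : hyp e [set: T] [set: T].
  by move=> v _; exists v; rewrite ?inE ?connect0.
have [c [p1 p2 p3]] := main e_sym e_irr (max_card _) hypT.
have hlt : forall v, c v < tau e.
  move=> v; have [x [s [ps us als _ [lv sz]]]] := p3 v (in_setT v).
  have hsz : size (x :: s) < #|T|.+1.
    by rewrite ltnS -(card_uniqP us) max_card.
  have hP : [exists t : (Ordinal hsz).-tuple T, is_gpath e t].
    apply/existsP; exists (in_tuple (x :: s)); by rewrite /is_gpath; apply/andP; split.
  have := @leq_bigmax_cond _ (fun n : 'I_#|T|.+1 => [exists t : n.-tuple T, is_gpath e t]) (fun n : 'I_#|T|.+1 => nat_of_ord n) (Ordinal hsz) hP.
  by rewrite /= sz.
pose cf : {ffun T -> 'I_(tau e)} := [ffun v => Ordinal (hlt v)].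
rewrite /acyclic_chrom; case: ex_minnP => m _ hmin; apply: hmin.
apply/existsP; exists cf; apply/andP; split.
  apply/forallP => u; apply/forallP => w; apply/implyP => euw; rewrite !ffunE.
  exact: (p1 u w (in_setT _) (in_setT _) euw).
apply/negP => /existsP [n /existsP [s /andP [/and3P [us s3 cs] hs]]].
have sne : tval s != [::] by case: (tval s) s3.
have [v vs vmax] := max_in c sne.
case: (rot_to vs) => i s' hrot.
have cs' : cycle e (v :: s') by rewrite -hrot rot_cycle.
have us' : uniq (v :: s') by rewrite -hrot rot_uniq.
have ms' : forall w, w \in v :: s' -> w \in tval s by move=> w; rewrite -hrot mem_rot.
have sz' : 3 <= size (v :: s') by rewrite -hrot size_rot.
case: s' cs' us' ms' sz' {hrot} => [|a [|t0 t]] // cs' us' ms' _.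
move: cs' => /= /andP[eva]; rewrite rcons_path => /andP[_ ebv].
set b := last t0 t in ebv.
case/andP: ebv => _ ebv.
have evb : e v b by rewrite (e_sym v b).
have inA : a \in v :: a :: t0 :: t by rewrite !inE eqxx orbT.
have bt : b \in t0 :: t by exact: mem_last.
have inB : b \in v :: a :: t0 :: t by rewrite inE in_cons bt !orbT.
have inV : v \in v :: a :: t0 :: t by rewrite inE eqxx.
have mc : forall w, w \in v :: a :: t0 :: t -> cf w \in undup (map cf s).
  by move=> w /ms' ws; rewrite mem_undup map_f.
have neva : c v != c a by apply: p1; rewrite ?in_setT.
have nevb : c v != c b by apply: p1; rewrite ?in_setT.
have cab : c a = c b.
  apply/eqP; apply/negPn/negP => nab.
  have : size [:: cf v; cf a; cf b] <= size (undup (map cf s)).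
    apply: uniq_leq_size.
      by rewrite /= !inE !ffunE negb_or /= neva nevb nab.
    move=> z; rewrite !inE => /orP[/eqP->|/orP[/eqP->|/eqP->]]; exact: mc.
  by move=> /leq_trans /(_ hs).
have lta : c a < c v by rewrite ltn_neqAle eq_sym neva vmax // ms'.
have ltb : c b < c v by rewrite ltn_neqAle eq_sym nevb vmax // ms'.
have eab := p2 v a b (in_setT _) (in_setT _) (in_setT _) eva evb lta ltb cab.
move: us'; rewrite /= -eab in bt.
by rewrite /= bt andbF.
Qed.
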